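(* Let $\alpha>-1$ and let $n\ge 0$ be an integer. The matrix $\big((\alpha+1)_{j+k}\big)_{j,k=0}^{n}$ is invertible and \[ \big((\alpha+1)_{j+k}\big)_{j,k=0}^{n}{}^{-1}=\left(\sum_{\ell=0}^{n}\frac{(\alpha+1)_{\ell}\,(-\ell)_{j}\,(-\ell)_{k}}{\ell!\,(\alpha+1)_{j}\,(\alpha+1)_{k}\,j!\,k!}\right)_{j,k=0}^{n}. \]
   Context: For a complex number $z$ and integer $m\ge0$, $(z)_m=z(z+1)\cdots(z+m-1)$ denotes the shifted factorial, with $(z)_0=1$ (so $(-\ell)_j=0$ when $j>\ell$). *)

(* Defs.v *)
From HB Require Import structures.
From mathcomp Require Import all_boot all_order all_algebra.
Set Implicit Arguments. Unset Strict Implicit. Unset Printing Implicit Defensive.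
Import Order.TTheory GRing.Theory Num.Theory.
Local Open Scope ring_scope.

Definition poch {R : pzSemiRingType} (z : R) (m : nat) : R :=
  \prod_(i < m) (z + i%:R).

(* Main.v *)
Require Import Defs.
From HB Require Import structures.
From mathcomp Require Import all_boot all_order all_algebra.
Import Order.TTheory GRing.Theory Num.Theory.
Local Open Scope ring_scope.

Section S.
Variable R : realFieldType.

Lemma pochS (z : R) m : poch z m.+1 = poch z m * (z + m%:R).
Proof. by rewrite /poch big_ord_recr. Qed.

Lemma poch0 (z : R) : poch z 0 = 1.
Proof. by rewrite /poch big_ord0. Qed.

Lemma pochSl (z : R) m : poch z m.+1 = z * poch (z + 1) m.
Proof.
rewrite /poch big_ord_recl addr0; congr (_ * _).
by apply: eq_bigr => i _; rewrite -addrA; congr (_ + _); rewrite addrC natr1.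
Qed.

Lemma poch_gt0 (z : R) m : 0 < z -> 0 < poch z m.
Proof.
move=> hz; elim: m => [|m IH]; first by rewrite poch0.
by rewrite pochS mulr_gt0 // ltr_wpDr.
Qed.

Lemma pochD (z : R) k m : poch z (k + m) = poch z k * poch (z + k%:R) m.
Proof.
elim: m => [|m IH]; first by rewrite addn0 poch0 mulr1.
by rewrite addnS !pochS IH mulrA natrD addrA.
Qed.

Lemma poch_negnat (l k : nat) : poch (- (l%:R) : R) k = (-1) ^+ k * (l ^_ k)%:R.
Proof.
elim: k => [|k IH]; first by rewrite poch0 ffactn0 mulr1.
rewrite pochS IH ffactnSr natrM exprS.
case: (leqP k l) => hk.
  by rewrite natrB // addrC -opprB mulrN mulN1r mulNr mulrA.
by rewrite ffact_small // mulr0n !(mulr0, mul0r).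
Qed.

Definition Dl (N l : nat) (f : nat -> R) :=
  \sum_(k < N) (-1) ^+ k * ('C(l, k))%:R * f k.

Lemma Dl_ext N l f : (l < N)%N -> Dl N.+1 l f = Dl N l f.
Proof. by move=> h; rewrite /Dl big_ord_recr /= bin_small // mulr0 mul0r addr0. Qed.

Lemma Dl0 N f : Dl N.+1 0 f = f 0%N.
Proof.
rewrite /Dl big_ord_recl /= mul1r mul1r big1 ?addr0 // => i _.
by rewrite bin0n /= mulr0 mul0r.
Qed.

Lemma DlZ N l c f : Dl N l (fun k => c * f k) = c * Dl N l f.
Proof. by rewrite /Dl mulr_sumr; apply: eq_bigr => i _; rewrite mulrCA. Qed.

Lemma DlS N l f : (l < N)%N ->
  Dl N.+1 l.+1 f = - Dl N l (fun k => f k.+1 - f k).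
Proof.
move=> h.
have e1 : Dl N.+1 l.+1 f = f 0%N - \sum_(i < N) (-1) ^+ i * ('C(l, i.+1))%:R * f i.+1
            - Dl N l (fun k => f k.+1).
  rewrite /Dl big_ord_recl /= bin0 mul1r mul1r -addrA; congr (_ + _).
  rewrite -opprD -big_split /= -sumrN; apply: eq_bigr => i _.
  by rewrite /bump /= add1n binS natrD exprS mulN1r !mulNr mulrDr mulrDl.
have e2 : Dl N.+1 l f = f 0%N - \sum_(i < N) (-1) ^+ i * ('C(l, i.+1))%:R * f i.+1.
  rewrite /Dl big_ord_recl /= bin0 mul1r mul1r; congr (_ + _).
  rewrite -sumrN; apply: eq_bigr => i _.
  by rewrite /bump /= add1n exprS mulN1r !mulNr.
rewrite e1 -e2 Dl_ext // /Dl -sumrB -sumrN; apply: eq_bigr => i _.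
by rewrite mulrBr opprB.
Qed.


Lemma Dl_eq N l f g : (forall k, f k = g k) -> Dl N l f = Dl N l g.
Proof. by move=> e; apply: eq_bigr => i _; rewrite e. Qed.

Lemma Tpoch l : forall (a : R) m N, (l < N)%N ->
  Dl N l (fun k => poch (a + k%:R) m) = (-1) ^+ l * (m ^_ l)%:R * poch (a + l%:R) (m - l).
Proof.
elim: l => [|l IH] a m N hN.
  case: N hN => // N _; by rewrite Dl0 ffactn0 !mul1r subn0.
case: N hN => // N hN.
rewrite DlS //.
case: m => [|m].
  rewrite (@Dl_eq _ _ _ (fun k => 0 * 0)); last by move=> k; rewrite !poch0 subrr mulr0.
  by rewrite DlZ mul0r ffact0n /= mulr0 mul0r oppr0.
rewrite (@Dl_eq _ _ _ (fun k => m.+1%:R * poch ((a + 1) + k%:R) m)); last first.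
  move=> k; rewrite pochS pochSl.
  have -> : a + k.+1%:R = a + k%:R + 1 by rewrite -natr1 addrA.
  have -> : a + 1 + k%:R = a + k%:R + 1 by rewrite addrAC.
  rewrite [_ * poch _ _]mulrC -mulrBr mulrC; congr (_ * _).
  by rewrite -(addrA (a + k%:R) 1 m%:R) addrAC subrr add0r addrC natr1.
rewrite DlZ IH // ffactSS subSS natrM exprS !mulN1r !mulNr; congr (- _).
have -> : a + l.+1%:R = a + 1 + l%:R by rewrite -natr1 addrAC addrA.
by rewrite !mulrA [_ * (-1) ^+ l]mulrC.
Qed.

Lemma Dbin m : forall (j N : nat), (m < N)%N ->
  Dl N m (fun l => ('C(l, j))%:R) = if m == j then (-1) ^+ m else 0.
Proof.
elim: m => [|m IH] j N hN.
  case: N hN => // N _; rewrite Dl0; case: j => [|j] /=; by rewrite ?bin0 ?bin0n.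
case: N hN => // N hN.
rewrite DlS //.
case: j => [|j].
  rewrite (@Dl_eq _ _ _ (fun k => 0 * 0)); last by move=> k; rewrite !bin0 subrr mulr0.
  by rewrite DlZ mul0r oppr0.
rewrite (@Dl_eq _ _ _ (fun k => 'C(k, j)%:R)); last by move=> k; rewrite binS natrD (addrC 'C(k, j.+1)%:R) addrK.
rewrite IH // eqSS; case: (m == j); last by rewrite oppr0.
by rewrite exprS mulN1r.
Qed.


End S.
Arguments Dl {R}.

Lemma rearr (F : fieldType) (P Sj Cj Jf Sk Ck Kf L Pj Pk Q : F) : Jf != 0 -> Kf != 0 -> Pk != 0 ->
 P * (Sj * (Cj * Jf)) * (Sk * (Ck * Kf)) / (L * Pj * Pk * Jf * Kf) * (Pk * Q)
 = P * (Sj * Cj) / (L * Pj) * (Sk * Ck * Q).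
Proof.
move=> h1 h2 h3.
rewrite !invfM.
rewrite [LHS](@GRing.mul F).[AC (1*(1*2)*(1*2)*5*2) ((4*11)*(7*12)*(13*10)*(1*2*3*8*9*5*6*14))].
rewrite !mulfV // !mul1r.
by rewrite [RHS](@GRing.mul F).[AC (1*2*2*3) (1*2*3*4*5*6*7*8)].
Qed.

Lemma rearr2 (F : fieldType) (P Sj Cj L Pj Sl C Q : F) : L != 0 ->
  P * (Sj * Cj) / (L * Pj) * (Sl * (C * L) * Q) = (P * Q) / Pj * Sj * (Sl * C * Cj).
Proof.
move=> h; rewrite !invfM.
rewrite [LHS](@GRing.mul F).[AC (1*2*2*((1*2)*1)) ((8*4)*(1*9*5*2*6*7*3))].
rewrite mulfV // mul1r.
by rewrite [RHS](@GRing.mul F).[AC (2*1*1*3) (1*2*3*4*5*6*7)].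
Qed.

Theorem mainTheorem2 (R : realFieldType) (alpha : R) (n : nat) (halpha : -1 < alpha) :
  let H : 'M[R]_n.+1 := \matrix_(j < n.+1, k < n.+1) poch (alpha + 1) (j + k)%N in
  H \in unitmx /\
  invmx H =
    \matrix_(j < n.+1, k < n.+1)
      \sum_(l < n.+1)
        (poch (alpha + 1) l * poch (- (l%:R)) j * poch (- (l%:R)) k) /
        ((l`!)%:R * poch (alpha + 1) j * poch (alpha + 1) k * (j`!)%:R * (k`!)%:R).
Proof.
move=> H.
set G := \matrix_(j < n.+1, k < n.+1) _.
set a := alpha + 1.
have ha : 0 < a by rewrite /a -ltrBlDr sub0r.
have pnz : forall k, poch a k != 0 by move=> k; rewrite gt_eqF // poch_gt0.
have fnz : forall k, (k`!)%:R != 0 :> R by move=> k; rewrite pnatr_eq0 -lt0n fact_gt0.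
have GH : G *m H = 1%:M.
  apply/matrixP => j m; rewrite !mxE.
  under eq_bigr => k _ do rewrite !mxE mulr_suml.
  rewrite exchange_big /=.
  rewrite (eq_bigr (fun l : 'I_n.+1 => poch a l * ((-1) ^+ j * ('C(l, j))%:R) / ((l`!)%:R * poch a j)
       * Dl n.+1 l (fun k => poch (a + k%:R) m))); last first.
    move=> l _; rewrite /Dl mulr_sumr; apply: eq_bigr => k _.
    by rewrite !poch_negnat -!bin_ffact !natrM pochD rearr.
  rewrite (eq_bigr (fun l : 'I_n.+1 => poch a m / poch a j * (-1) ^+ j *
      ((-1) ^+ l * ('C(m, l))%:R * ('C(l, j))%:R))); last first.
    move=> l _; rewrite Tpoch // -bin_ffact natrM.
    case: (leqP l m) => hl.
      by rewrite rearr2 // -pochD subnKC.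
    by rewrite (bin_small hl) !(mulr0, mul0r).
  rewrite -mulr_sumr -/(Dl n.+1 m (fun l => ('C(l, j))%:R)) Dbin //.
  case: (eqVneq j m) => [->|ne].
    by rewrite eqxx divff // mul1r -signr_odd -signr_addb addbb.
  have -> : (nat_of_ord m == nat_of_ord j) = false.
    by apply/negP => /eqP /val_inj e; move: ne; rewrite e eqxx.
  by rewrite mulr0.
split; first by case: (mulmx1_unit GH).
have Hu : H \in unitmx by case: (mulmx1_unit GH).
by rewrite -[RHS]mulmx1 -(mulmxV Hu) mulmxA GH mul1mx.
Qed.
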